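(* Let $\mathcal{H}_X,\mathcal{H}_Y$ be reproducing kernel Hilbert spaces, let $(X_1,Y_1),\dots,(X_n,Y_n)$ be data points with centered feature vectors $\tilde{\Phi}(X_i)\in\mathcal{H}_X$, $\tilde{\Phi}(Y_i)\in\mathcal{H}_Y$. Let $\zeta:[0,\infty)\to\mathbb{R}$ satisfy (i) $\zeta$ is non-decreasing, $\zeta(0)=0$ and $\zeta(t)/t\to0$ as $t\to0$; (ii) $\varphi(t)=\zeta'(t)/t$ exists and is finite; (iii) $\zeta'$ and $\varphi$ are continuous and bounded; and assume moreover that $\varphi$ is non-increasing. Let $$J(\Sigma)=\sum_{i=1}^n \zeta\big(\|\tilde{\Phi}(X_i)\otimes\tilde{\Phi}(Y_i)-\Sigma\|\big),\qquad S(\Sigma)=\sum_{i=1}^n\varphi\big(\|\tilde{\Phi}(X_i)\otimes\tilde{\Phi}(Y_i)-\Sigma\|\big)\big(\tilde{\Phi}(X_i)\otimes\tilde{\Phi}(Y_i)-\Sigma\big),$$ norms being in $\mathcal{H}_X\otimes\mathcal{H}_Y$, and let $U=\{\Sigma\in\mathcal{H}_X\otimes\mathcal{H}_Y: S(\Sigma)=0\}$. Let $\{\Sigma^{(h)}\}_{h\ge1}$ be the sequence produced by the KIRWLS algorithm, i.e. $\Sigma^{(h+1)}=\sum_{i=1}^n w_i^{(h)}\tilde{\Phi}(X_i)\otimes\tilde{\Phi}(Y_i)$ with $$w_i^{(h)}=\frac{\varphi(\|\tilde{\Phi}(X_i)\otimes\tilde{\Phi}(Y_i)-\Sigma^{(h)}\|)}{\sum_{b=1}^n\varphi(\|\tilde{\Phi}(X_b)\otimes\tilde{\Phi}(Y_b)-\Sigma^{(h)}\|)}.$$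 Then $J(\Sigma^{(h)})$ decreases monotonically at every iteration and converges, and $$\inf_{\Sigma\in U}\|\Sigma^{(h)}-\Sigma\|_{\mathcal{H}_X\otimes\mathcal{H}_Y}\to0\quad\text{as }h\to\infty.$$
   Context: Centered feature vectors are $\tilde{\Phi}(X_i)=k_X(\cdot,X_i)-m_X$, $\tilde{\Phi}(Y_i)=k_Y(\cdot,Y_i)-m_Y$ for positive definite kernels $k_X,k_Y$ and fixed (empirical, possibly weighted) kernel mean elements $m_X\in\mathcal{H}_X$, $m_Y\in\mathcal{H}_Y$. $\mathcal{H}_X\otimes\mathcal{H}_Y$ is the Hilbert tensor product (Hilbert–Schmidt norm). *)

(* Defs.v *)
From HB Require Import structures.
From mathcomp Require Import all_boot all_order all_algebra.
From mathcomp Require Import all_classical all_reals all_analysis.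
Set Implicit Arguments. Unset Strict Implicit. Unset Printing Implicit Defensive.
Import Order.TTheory GRing.Theory Num.Theory.
Import numFieldNormedType.Exports.
Local Open Scope classical_set_scope.
Local Open Scope ring_scope.

Definition inner_product_for (R : realType) (V : normedModType R)
  (ip : V -> V -> R) : Prop :=
  [/\ forall x y, ip x y = ip y x,
      forall (a : R) (x y z : V), ip (a *: x + y) z = a * ip x z + ip y z
    & forall x, `|x| = Num.sqrt (ip x x)].

Definition tensor_span (R : realType) (HX HY H : normedModType R)
  (tens : HX -> HY -> H) : set H :=
  [set s | exists (m : nat) (c : 'I_m -> R) (x : 'I_m -> HX) (y : 'I_m -> HY),
      s = \sum_(k < m) c k *: tens (x k) (y k)].

(* (H, ipH, tens) is the Hilbert tensor product of (HX, ipX) and (HY, ipY):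
   tens is bilinear, <x (x) y, x' (x) y'> = <x,x'><y,y'>, and the elementary
   tensors span a dense subspace (H is complete by its type). *)
Definition hilbert_tensor_product (R : realType) (HX HY H : normedModType R)
  (ipX : HX -> HX -> R) (ipY : HY -> HY -> R) (ipH : H -> H -> R)
  (tens : HX -> HY -> H) : Prop :=
  [/\ forall (a : R) x x' y, tens (a *: x + x') y = a *: tens x y + tens x' y,
      forall (a : R) x y y', tens x (a *: y + y') = a *: tens x y + tens x y',
      forall x x' y y', ipH (tens x y) (tens x' y') = ipX x x' * ipY y y'
    & closure (tensor_span tens) = setT].

Section Objective.
Variables (R : realType) (H : normedModType R) (n : nat).

Definition J_obj (zeta : R -> R) (Z : 'I_n -> H) (Sig : H) : R :=
  \sum_(i < n) zeta `|Z i - Sig|.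

Definition S_map (phi : R -> R) (Z : 'I_n -> H) (Sig : H) : H :=
  \sum_(i < n) phi `|Z i - Sig| *: (Z i - Sig).

Definition kirwls_weight (phi : R -> R) (Z : 'I_n -> H) (Sig : H) (i : 'I_n) : R :=
  phi `|Z i - Sig| / \sum_(b < n) phi `|Z b - Sig|.

Definition kirwls_step (phi : R -> R) (Z : 'I_n -> H) (Sig : H) : H :=
  \sum_(i < n) kirwls_weight phi Z Sig i *: Z i.
End Objective.

(* Main.v *)
Require Import Defs.
From HB Require Import structures.
From mathcomp Require Import all_boot all_order all_algebra.
From mathcomp Require Import all_classical all_reals all_analysis.
From mathcomp Require Import ring lra.
Set Implicit Arguments. Unset Strict Implicit. Unset Printing Implicit Defensive.
Import Order.TTheory GRing.Theory Num.Theory.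
Import numFieldNormedType.Exports.
Local Open Scope classical_set_scope.
Local Open Scope ring_scope.
Section Real.
Variables (R : realType) (zeta phi : R -> R).
Hypothesis zeta_nondecr : forall s t : R, 0 <= s -> s <= t -> zeta s <= zeta t.
Hypothesis zeta0 : zeta 0 = 0.
Hypothesis zeta_o : (fun t => zeta t / t) @ 0^'+ --> 0.
Hypothesis zeta_der : forall t : R, 0 < t -> derivable zeta t 1.
Hypothesis phi_def : forall t : R, 0 < t -> phi t = derive1 zeta t / t.
Hypothesis phi_nonincr : forall s t : R, 0 <= s -> s <= t -> phi t <= phi s.

Lemma isd_f (k x : R) : 0 < x ->
  is_derive x 1 (fun t => zeta t - k * (t ^+ 2)) (derive1 zeta x - k * (2 * x)).
Proof.
move=> x0.
have h1 := derivableP (zeta_der x0).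
rewrite derive1E.
have h2 : is_derive x (1:R) (fun t : R => k * t ^+ 2) (k * (2 * x)).
  apply: is_derive_eq.
  rewrite /GRing.scale /= !mulr1; congr (_ * _); ring.
exact: (is_deriveB h1 h2).
Qed.

Lemma dzetaE x : 0 < x -> derive1 zeta x = phi x * x.
Proof. by move=> x0; rewrite phi_def // divfK // gt_eqF. Qed.

Lemma fmvt (k a b : R) : 0 < a -> a < b ->
  exists2 c, a < c < b &
   (zeta b - k * b ^+ 2) - (zeta a - k * a ^+ 2) = (phi c * c - k * (2 * c)) * (b - a).
Proof.
move=> a0 ab.
have := @MVT R (fun t => zeta t - k * (t ^+ 2)) (fun x => derive1 zeta x - k * (2 * x)) a b ab.
case.
- move=> x; rewrite in_itv /= => /andP[ax _]; apply: isd_f; exact: lt_trans ax.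
- apply: derivable_within_continuous => x; rewrite in_itv /= => /andP[ax _].
  have := isd_f k (lt_le_trans a0 ax). by case.
move=> c; rewrite in_itv /= => /andP[ac cb] ->.
exists c; first by rewrite ac cb.
by rewrite dzetaE // (lt_trans a0 ac).
Qed.

Lemma phi_ge0 t : 0 <= t -> 0 <= phi t.
Proof.
move=> t0; rewrite leNgt; apply/negP => pt.
have a0 : 0 < t + 1 by lra.
have pa : phi (t + 1) < 0 by apply: le_lt_trans pt; apply: phi_nonincr => //; lra.
have ht : t + 1 < t + 1 + 1 by lra.
have [c /andP[ac cb]] := fmvt 0 a0 ht.
have pc : phi c < 0 by apply: le_lt_trans pa; apply: phi_nonincr; lra.
have : zeta (t + 1) <= zeta (t + 1 + 1) by apply: zeta_nondecr; lra.
rewrite !mul0r !subr0 => h1 h2.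
have : phi c * c < 0 by rewrite pmulr_llt0 //; lra.
nra.
Qed.

Lemma zeta_ge0 t : 0 <= t -> 0 <= zeta t.
Proof. by move=> t0; rewrite -zeta0; apply: zeta_nondecr. Qed.

Lemma tangent_pos t t0 : 0 < t -> 0 < t0 ->
  zeta t <= zeta t0 + phi t0 / 2 * (t ^+ 2 - t0 ^+ 2).
Proof.
move=> tp t0p; set k := phi t0 / 2.
suff : zeta t - k * t ^+ 2 <= zeta t0 - k * t0 ^+ 2 by lra.
have [tt0|t0t|->] := ltgtP t t0; last by [].
- have [c /andP[ac cb] E] := fmvt k tp tt0.
  have h1 : phi t0 <= phi c by apply: phi_nonincr; lra.
  have P : 0 <= (phi c - phi t0) * c * (t0 - t).
    by rewrite !mulr_ge0 //; lra.
  have E2 : (phi c * c - k * (2 * c)) * (t0 - t) = (phi c - phi t0) * c * (t0 - t).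
    by rewrite /k; field.
  rewrite E2 in E; lra.
- have [c /andP[ac cb] E] := fmvt k t0p t0t.
  have h1 : phi c <= phi t0 by apply: phi_nonincr; lra.
  have P : 0 <= (phi t0 - phi c) * c * (t - t0).
    by rewrite !mulr_ge0 //; lra.
  have E2 : (phi c * c - k * (2 * c)) * (t - t0) = - ((phi t0 - phi c) * c * (t - t0)).
    by rewrite /k; field.
  rewrite E2 in E; lra.
Qed.

Lemma le0_small (X : R) : (forall e, 0 < e -> exists2 y, y < e & X <= y) -> X <= 0.
Proof.
move=> h; rewrite leNgt; apply/negP => X0.
have [y yX Xy] := h X X0; lra.
Qed.

Lemma tangent t t0 : 0 <= t -> 0 <= t0 ->
  zeta t <= zeta t0 + phi t0 / 2 * (t ^+ 2 - t0 ^+ 2).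
Proof.
move=> t0' t00.
have [tp|] := ltP 0 t; have [t0p|] := ltP 0 t0.
- exact: tangent_pos.
- move=> t0le; have -> : t0 = 0 by lra.
  rewrite zeta0 add0r expr0n /= subr0.
  suff : zeta t - phi 0 / 2 * t ^+ 2 <= 0 by lra.
  apply: le0_small => e e0.
  have m0 : 0 < Num.min t e by rewrite lt_min tp e0.
  have hn : \forall y \near (0:R)^'+, `|zeta y / y| < 1 by apply: (cvgr0_norm_lt _ zeta_o).
  have [y [y0 [ym hy]]] : exists y, 0 < y /\ y < Num.min t e /\ `|zeta y / y| < 1.
    near (0:R)^'+ => y.
    exists y; split; [|split].
    - near: y; exact: nbhs_right_gt.
    - near: y; exact: nbhs_right_lt.
    - near: y; exact: hn.
  Unshelve. all: end_near.
  move: ym; rewrite lt_min => /andP[yt ye].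
  exists (zeta y); last first.
    have := tangent_pos tp y0.
    have : phi y <= phi 0 by apply: phi_nonincr; lra.
    have : 0 <= phi y by apply: phi_ge0; lra.
    have : 0 <= phi 0 by apply: phi_ge0.
    move=> a b c d; have : y ^+ 2 <= t ^+ 2 by rewrite !expr2; apply: ler_pM; lra.
    move=> f.
    have P1 : 0 <= (phi 0 - phi y) * (t ^+ 2 - y ^+ 2) by rewrite mulr_ge0 //; lra.
    have P2 : 0 <= phi 0 * y ^+ 2 by rewrite mulr_ge0 // sqr_ge0.
    lra.
  have : zeta y / y < 1 by apply: le_lt_trans hy; exact: ler_norm.
  rewrite ltr_pdivrMr // mul1r => h; lra.
- move=> tle; have -> : t = 0 by lra.
  rewrite zeta0 expr0n /= sub0r.
  suff : phi t0 / 2 * t0 ^+ 2 - zeta t0 <= 0 by lra.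
  apply: le0_small => e e0.
  set c := phi t0 / 2.
  have c0 : 0 <= c by rewrite /c divr_ge0 // phi_ge0 //; lra.
  pose y := Num.min (t0 / 2) (Num.min 1 (e / (c + 1) / 2)).
  have y0 : 0 < y by rewrite /y !lt_min !divr_gt0 //=; lra.
  have y1 : y <= 1 by rewrite /y !ge_min lexx !orbT.
  have ye : y <= e / (c + 1) / 2 by rewrite /y !ge_min lexx !orbT.
  have yt2 : y <= t0 / 2 by rewrite /y ge_min lexx.
  have yt : y < t0 by lra.
  have c1 : 0 < c + 1 by lra.
  exists (c * y ^+ 2).
    have E1 : y ^+ 2 <= y by rewrite expr2; apply: ler_piMr; lra.
    have E2 : e / (c + 1) / 2 * (c + 1) = e / 2 by field; lra.
    have E3 : c * y ^+ 2 <= c * y by rewrite ler_wpM2l.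
    have E4 : c * y <= (c + 1) * y by rewrite ler_wpM2r //; lra.
    have E5 : (c + 1) * y <= (c + 1) * (e / (c + 1) / 2) by rewrite ler_wpM2l //; lra.
    rewrite [X in _ <= X]mulrC E2 in E5; lra.
  have := tangent_pos y0 t0p; have := zeta_ge0 (ltW y0); rewrite -/c.
  have : 0 <= c * y ^+ 2 by rewrite mulr_ge0 // sqr_ge0.
  lra.
- move=> a b; have -> : t0 = 0 by lra. have -> : t = 0 by lra. lra.
Qed.
End Real.
Section IP.
Variables (R : realType) (H : normedModType R) (ip : H -> H -> R).
Hypothesis hH : inner_product_for ip.

Lemma ipC x y : ip x y = ip y x. Proof. by case: hH. Qed.
Lemma ipL a x y z : ip (a *: x + y) z = a * ip x z + ip y z. Proof. by case: hH. Qed.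
Lemma normE x : `|x| = Num.sqrt (ip x x). Proof. by case: hH. Qed.

Lemma ip0l z : ip 0 z = 0.
Proof.
have := ipL 1 0 0 z; rewrite scaler0 addr0 mul1r => h; lra.
Qed.
Lemma ipDl x y z : ip (x + y) z = ip x z + ip y z.
Proof. by rewrite -[x]scale1r ipL mul1r scale1r. Qed.
Lemma ipZl a x z : ip (a *: x) z = a * ip x z.
Proof. by rewrite -[a *: x]addr0 ipL ip0l addr0. Qed.
Lemma ipNl x z : ip (- x) z = - ip x z.
Proof. by rewrite -scaleN1r ipZl mulN1r. Qed.
Lemma ipBl x y z : ip (x - y) z = ip x z - ip y z.
Proof. by rewrite ipDl ipNl. Qed.
Lemma ipDr x y z : ip z (x + y) = ip z x + ip z y.
Proof. by rewrite ipC ipDl !(ipC z). Qed.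
Lemma ipBr x y z : ip z (x - y) = ip z x - ip z y.
Proof. by rewrite ipC ipBl !(ipC z). Qed.
Lemma ip_suml (I : finType) (F : I -> H) z :
  ip (\sum_i F i) z = \sum_i ip (F i) z.
Proof.
apply: (big_morph (fun v => ip v z)); first by move=> ??; rewrite ipDl.
exact: ip0l.
Qed.

Lemma ip_ge0 x : 0 <= ip x x.
Proof.
rewrite leNgt; apply/negP => h.
have : `|x| = 0 by rewrite normE; apply/eqP; rewrite sqrtr_eq0 ltW.
move/normr0_eq0 => x0; move: h; rewrite x0 ip0l; lra.
Qed.

Lemma normsq x : `|x| ^+ 2 = ip x x.
Proof. by rewrite normE sqr_sqrtr // ip_ge0. Qed.

Lemma normsqD x y : `|x + y| ^+ 2 = `|x| ^+ 2 + 2 * ip x y + `|y| ^+ 2.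
Proof. by rewrite !normsq ipDl !ipDr (ipC y x); ring. Qed.

Lemma weighted_sq (n : nat) (p : 'I_n -> R) (Z : 'I_n -> H) (M s : H) :
  (\sum_i p i) *: M = \sum_i p i *: Z i ->
  \sum_i p i * `|Z i - s| ^+ 2 =
  \sum_i p i * `|Z i - M| ^+ 2 + (\sum_i p i) * `|M - s| ^+ 2.
Proof.
move=> WM.
have E i : p i * `|Z i - s| ^+ 2 =
   p i * `|Z i - M| ^+ 2 + 2 * ip (p i *: (Z i - M)) (M - s) + p i * `|M - s| ^+ 2.
  have -> : Z i - s = (Z i - M) + (M - s) by rewrite addrA subrK.
  by rewrite normsqD ipZl; ring.
rewrite (eq_bigr _ (fun i _ => E i)) !big_split /= -mulr_sumr -ip_suml.
have -> : \sum_i p i *: (Z i - M) = 0.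
  rewrite (eq_bigr (fun i => p i *: Z i - p i *: M)); last by move=> i _; rewrite scalerBr.
  by rewrite sumrB -scaler_suml WM subrr.
by rewrite ip0l mulr0 addr0 mulr_suml.
Qed.
End IP.
Section Kir.
Variables (R : realType) (H : normedModType R) (ip : H -> H -> R).
Hypothesis hH : inner_product_for ip.
Variables (zeta phi : R -> R).
Hypothesis zeta_nondecr : forall s t : R, 0 <= s -> s <= t -> zeta s <= zeta t.
Hypothesis zeta0 : zeta 0 = 0.
Hypothesis zeta_o : (fun t => zeta t / t) @ 0^'+ --> 0.
Hypothesis zeta_der : forall t : R, 0 < t -> derivable zeta t 1.
Hypothesis phi_def : forall t : R, 0 < t -> phi t = derive1 zeta t / t.
Hypothesis phi_nonincr : forall s t : R, 0 <= s -> s <= t -> phi t <= phi s.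
Variables (n : nat) (Z : 'I_n -> H).

Let p (s : H) i := phi `|Z i - s|.
Let W (s : H) := \sum_i p s i.
Let M (s : H) := kirwls_step phi Z s.

Lemma p_ge0 s i : 0 <= p s i.
Proof. by apply: (phi_ge0 zeta_nondecr zeta_der phi_def phi_nonincr). Qed.

Lemma W_ge0 s : 0 <= W s.
Proof. by apply: sumr_ge0 => i _; apply: p_ge0. Qed.

Lemma WM s : W s *: M s = \sum_i p s i *: Z i.
Proof.
rewrite /M /kirwls_step scaler_sumr.
have [W0|Wn0] := eqVneq (W s) 0.
  rewrite W0; apply: eq_bigr => i _.
  have -> : p s i = 0 by apply: (psumr_eq0P (fun i _ => p_ge0 s i) W0).
  by rewrite !scale0r.
apply: eq_bigr => i _; rewrite scalerA /kirwls_weight -/(p s i).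
by rewrite -/(W s) mulrC divfK.
Qed.

Lemma S_eq s : S_map phi Z s = W s *: (M s - s).
Proof.
rewrite /S_map scalerBr WM scaler_suml -sumrB.
by apply: eq_bigr => i _; rewrite scalerBr.
Qed.

Lemma decrease s : J_obj zeta Z (M s) + W s / 2 * `|M s - s| ^+ 2 <= J_obj zeta Z s.
Proof.
have h1 : J_obj zeta Z (M s) <= \sum_i (zeta `|Z i - s| +
     p s i / 2 * (`|Z i - M s| ^+ 2 - `|Z i - s| ^+ 2)).
  apply: ler_sum => i _; apply: (tangent zeta_nondecr zeta0 zeta_o zeta_der phi_def phi_nonincr) => //.
rewrite big_split /= -/(J_obj zeta Z s) in h1.
have E : \sum_i p s i / 2 * (`|Z i - M s| ^+ 2 - `|Z i - s| ^+ 2) =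
   (\sum_i p s i * `|Z i - M s| ^+ 2 - \sum_i p s i * `|Z i - s| ^+ 2) / 2.
  rewrite -sumrB mulr_suml; apply: eq_bigr => i _; ring.
rewrite E (weighted_sq hH s (WM s)) -/(W s) in h1.
lra.
Qed.

Lemma W_le s : W s <= n%:R * phi 0.
Proof.
have -> : n%:R * phi 0 = \sum_(i < n) phi 0 by rewrite sumr_const card_ord mulr_natl.
by apply: ler_sum => i _; apply: phi_nonincr.
Qed.

Lemma S_bound s :
  `|S_map phi Z s| ^+ 2 <= 2 * (n%:R * phi 0) * (J_obj zeta Z s - J_obj zeta Z (M s)).
Proof.
have d := decrease s.
rewrite S_eq normrZ ger0_norm ?W_ge0 // exprMn.
have h0 := W_ge0 s; have h1 := W_le s.
have h2 : 0 <= `|M s - s| ^+ 2 by rewrite sqr_ge0.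
have h3 : W s ^+ 2 * `|M s - s| ^+ 2 <= n%:R * phi 0 * (W s * `|M s - s| ^+ 2).
  rewrite mulrA expr2 ler_wpM2r // ler_wpM2r //.
have h4 : 0 <= n%:R * phi 0 by apply: le_trans h1.
have h5 : W s * `|M s - s| ^+ 2 <= 2 * (J_obj zeta Z s - J_obj zeta Z (M s)) by lra.
have h6 := ler_wpM2l h4 h5.
apply: (le_trans h3); apply: (le_trans h6); rewrite mulrCA mulrA; lra.
Qed.
End Kir.
Section Limit.
Variables (R : realType) (H : normedModType R).

Lemma limit_arg (x : nat -> H) (K : set H) (S : H -> H) :
  compact K -> (forall h, K (x h.+1)) -> (forall s, {for s, continuous S}) ->
  S (x h) @[h --> \oo] --> 0 ->
  forall e, 0 < e -> \forall h \near \oo, exists s, S s = 0 /\ `|x h - s| < e.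
Proof.
move=> cK xK Sc Sx e e0.
apply: contrapT => nev.
pose A h := ~ exists s, S s = 0 /\ `|x h - s| < e.
have freq : forall N, exists h, (N <= h)%N /\ A h.
  move=> N; apply: contrapT => hn; apply: nev; exists N => // h /= hN.
  apply: contrapT => nh; apply: hn; exists h; split => //.
pose B N := x @` [set h | (N.+1 <= h)%N /\ A h].
pose G := filter_from setT B.
have GF : ProperFilter G.
  apply: filter_from_proper.
    apply: filter_from_filter; first by exists 0%N.
    move=> i j _ _; exists (maxn i j) => //.
    move=> y [h [hm Ah] <-]; split; exists h => //; split => //.
    - by apply: leq_trans hm; rewrite ltnS leq_maxl.
    - by apply: leq_trans hm; rewrite ltnS leq_maxr.
  move=> N _; have [h [hN Ah]] := freq N.+1; by exists (x h), h.
have GK : G K.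
  exists 0%N => // y [h [h1 _] <-]; case: h h1 => // h _; exact: xK.
have [s [Ks cl]] := cK G GF GK.
have S0 : S s = 0.
  apply: contrapT => Sn0.
  have eta0 : 0 < `|S s| / 2 by rewrite divr_gt0 // normr_gt0; apply/eqP.
  have nb : nbhs s [set t | `|S s - S t| < `|S s| / 2].
    exact: (cvgr_dist_lt _ _ (Sc s) _ eta0).
  have [N _ hN] := cvgr0_norm_lt _ Sx _ eta0.
  have Bg : G (B N) by exists N.
  have [y [[h [hN' Ah] <-] hy]] := cl _ _ Bg nb.
  have h1 : `|S (x h)| < `|S s| / 2 by apply: hN => /=; apply: leq_trans hN'.
  have := ler_normB (S s) (S (x h)).
  move: hy => /= hy.
  have : `|S s| <= `|S s - S (x h)| + `|S (x h)|.
    by rewrite -[X in `|X| <= _](subrK (S (x h))) ler_normD.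
  lra.
have nb2 : nbhs s [set t | `|s - t| < e] by exact: (cvgr_dist_lt _ _ (@cvg_id _ (nbhs s)) _ e0).
have Bg : G (B 0%N) by exists 0%N.
have [y [[h [_ Ah] <-] hy]] := cl _ _ Bg nb2.
apply: Ah; exists s; split => //; rewrite distrC; exact: hy.
Qed.
End Limit.
Section Cont.
Variables (R : realType) (H : normedModType R).

Lemma cvg_sum_ord {T : Type} (F : set_system T) {FF : Filter F} (V : normedModType R)
  (n : nat) (f : 'I_n -> T -> V) (l : 'I_n -> V) :
  (forall i, f i @ F --> l i) -> (fun x => \sum_i f i x) @ F --> \sum_i l i.
Proof.
elim: n f l => [|n IH] f l hf.
  rewrite big_ord0.
  have -> : (fun x => \sum_(i < 0) f i x) = (fun=> 0) by apply/funext => x; rewrite big_ord0.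
  exact: cvg_cst.
rewrite big_ord_recr /=.
have -> : (fun x => \sum_(i < n.+1) f i x) =
   (fun x => \sum_(i < n) f (widen_ord (leqnSn n) i) x + f ord_max x).
  by apply/funext => x; rewrite big_ord_recr.
apply: cvgD; last exact: hf.
exact: (IH (fun i => f (widen_ord (leqnSn n) i))).
Qed.

Lemma cvg_within_range {T : Type} (F : set_system T) {FF : Filter F}
   (g : T -> R) (t : R) (A : set R) :
  g @ F --> t -> (forall x, A (g x)) -> g @ F --> within A (nbhs t).
Proof.
move=> gF gA P /= hP.
have h2 : F (g @^-1` (fun y => A y -> P y)) := gF _ hP.
change (F (g @^-1` P)); apply: filterS h2 => x /= hx; exact: hx (gA x).
Qed.

Variables (n : nat) (Z : 'I_n -> H) (phi : R -> R).
Hypothesis phi_cont : {within [set t | 0 <= t], continuous phi}.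

Lemma S_cont s0 : {for s0, continuous (S_map phi Z)}.
Proof.
rewrite /S_map /continuous_at.
apply: (@cvg_sum_ord _ (nbhs s0) _ H n (fun i s => phi `|Z i - s| *: (Z i - s))).
move=> i; apply: cvgZ; last by apply: cvgB; [exact: cvg_cst|exact: cvg_id].
have hg : (fun s => `|Z i - s|) @ s0 --> `|Z i - s0|.
  by apply: cvg_norm; apply: cvgB; [exact: cvg_cst|exact: cvg_id].
have := (subspace_continuousP _ _).1 phi_cont `|Z i - s0| (normr_ge0 _).
move=> hphi.
have hw : (fun s => `|Z i - s|) @ s0 --> within [set t | 0 <= t] (nbhs `|Z i - s0|).
  by apply: cvg_within_range hg _ => x /=; exact: normr_ge0.
exact: (cvg_comp _ _ hw hphi).
Qed.

Definition Kset := (fun v : 'rV[R]_n => \sum_i v ord0 i *: Z i) @`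
    [set v : 'rV[R]_n | forall i, `[0, 1]%classic (v ord0 i)].

Lemma Kset_compact : compact Kset.
Proof.
have c1 : compact [set v : 'rV[R]_n | forall i, `[0, 1]%classic (v ord0 i)].
  exact: (@rV_compact R n (fun=> `[0, 1]%classic) (fun i => @segment_compact R 0 1)).
apply: continuous_compact c1.
apply: continuous_subspaceT => v.
apply: (@cvg_sum_ord _ (nbhs v) _ H n (fun i w => w ord0 i *: Z i)).
move=> i; apply: cvgZ; last exact: cvg_cst.
exact: coord_continuous.
Qed.
End Cont.
Lemma inf_bound (R : realType) (H : normedModType R) (U : set H) (x s : H) (e : R) :
  U s -> `|x - s| < e ->
  exists r : R, ereal_inf [set (`|x - t|)%:E | t in U] = r%:E /\ 0 <= r < e.
Proof.
move=> Us xs.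
set D := ereal_inf _.
have lb : (0 <= D)%E.
  by apply: le_ereal_inf_tmp => y [t _ <-]; rewrite lee_fin.
have ub : (D <= (`|x - s|)%:E)%E by apply: ereal_inf_lbound; exists s.
move: lb ub; case: D => [r| |] //= lb ub.
exists r; split => //; rewrite lee_fin in lb; rewrite lee_fin in ub.
by rewrite lb /=; apply: le_lt_trans ub xs.
Qed.

Unset Implicit Arguments.

Theorem theorem3 (R : realType)
  (HX HY H : completeNormedModType R)
  (ipX : HX -> HX -> R) (ipY : HY -> HY -> R) (ipH : H -> H -> R)
  (tens : HX -> HY -> H)
  (hX : inner_product_for ipX) (hY : inner_product_for ipY)
  (hH : inner_product_for ipH)
  (hT : hilbert_tensor_product ipX ipY ipH tens)
  (n : nat) (phiX : 'I_n -> HX) (phiY : 'I_n -> HY)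
  (zeta phi : R -> R)
  (* (i) *)
  (zeta_nondecr : forall s t : R, 0 <= s -> s <= t -> zeta s <= zeta t)
  (zeta0 : zeta 0 = 0)
  (zeta_o : (fun t => zeta t / t) @ 0^'+ --> 0)
  (* (ii) *)
  (zeta_der : forall t : R, 0 < t -> derivable zeta t 1)
  (phi_def : forall t : R, 0 < t -> phi t = derive1 zeta t / t)
  (* (iii) *)
  (dzeta_cont : {in [set t | 0 < t], continuous (derive1 zeta)})
  (dzeta_bdd : exists M, forall t : R, 0 < t -> `|derive1 zeta t| <= M)
  (phi_cont : {within [set t | 0 <= t], continuous phi})
  (phi_bdd : exists M, forall t : R, 0 <= t -> `|phi t| <= M)
  (* phi non-increasing *)
  (phi_nonincr : forall s t : R, 0 <= s -> s <= t -> phi t <= phi s)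
  (* KIRWLS sequence: Sig h is Sigma^(h+1) *)
  (Sig : nat -> H)
  (Sig_step : forall h, Sig h.+1 =
     kirwls_step phi (fun i => tens (phiX i) (phiY i)) (Sig h)) :
  let Z := fun i => tens (phiX i) (phiY i) in
  let U := [set s : H | S_map phi Z s = 0] in
  (forall h, J_obj zeta Z (Sig h.+1) <= J_obj zeta Z (Sig h)) /\
  cvg ((fun h => J_obj zeta Z (Sig h)) @ \oo) /\
  ((fun h => ereal_inf [set (`|Sig h - s|)%:E | s in U]) @ \oo --> 0%E).
Proof.
move=> Z U.
have hstep h : Sig h.+1 = kirwls_step phi Z (Sig h) by exact: Sig_step.
pose J h := J_obj zeta Z (Sig h).
have phi0 : 0 <= phi 0 by apply: (phi_ge0 zeta_nondecr zeta_der phi_def phi_nonincr).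
have P1 : forall h, J h.+1 <= J h.
  move=> h; rewrite /J hstep.
  have d := decrease hH zeta_nondecr zeta0 zeta_o zeta_der phi_def phi_nonincr Z (Sig h).
  apply: le_trans d; rewrite lerDl; apply: mulr_ge0; last exact: sqr_ge0.
  apply: divr_ge0 => //; exact: (W_ge0 zeta_nondecr zeta_der phi_def phi_nonincr).
have J_ge0 h : 0 <= J h.
  apply: sumr_ge0 => i _; apply: (zeta_ge0 zeta_nondecr zeta0); exact: normr_ge0.
have Jc : J @ \oo --> inf (J @` setT).
  apply: nonincreasing_cvgn; first by apply/nonincreasing_seqP.
  by exists 0 => _ [h _ <-]; exact: J_ge0.
split; first exact: P1.
split; first by apply/cvg_ex; exists (inf (J @` setT)).
set l := inf (J @` setT) in Jc.
have J1 : (fun h => J h.+1) @ \oo --> l by rewrite -(cvg_shiftS J) in Jc.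
have dc : (fun h => J h - J h.+1) @ \oo --> 0.
  have := cvgB Jc J1; rewrite subrr; exact.
set C := 2 * (n%:R * phi 0).
have C0 : 0 <= C by rewrite /C mulr_ge0 // mulr_ge0.
have Sx : S_map phi Z (Sig h) @[h --> \oo] --> 0.
  apply/cvgr0Pnorm_lt => e e0.
  have e2 : 0 < e ^+ 2 / (C + 1) by rewrite divr_gt0 ?exprn_gt0 //; lra.
  have hev := cvgr0_norm_lt _ dc _ e2.
  near=> h.
  have hd : `|J h - J h.+1| < e ^+ 2 / (C + 1).
    near: h; exact: hev.
  have sb := S_bound hH zeta_nondecr zeta0 zeta_o zeta_der phi_def phi_nonincr Z (Sig h).
  rewrite -hstep -/(J h) -/(J h.+1) -/C in sb.
  have hd' : J h - J h.+1 <= e ^+ 2 / (C + 1) by apply: le_trans (ltW hd); exact: ler_norm.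
  have h3 : C * (J h - J h.+1) <= C * (e ^+ 2 / (C + 1)) by apply: ler_wpM2l.
  have h4 : C * (e ^+ 2 / (C + 1)) < e ^+ 2.
    rewrite mulrA ltr_pdivrMr; last lra.
    have : 0 < e ^+ 2 by rewrite exprn_gt0.
    nra.
  have h5 : `|S_map phi Z (Sig h)| ^+ 2 < e ^+ 2 by lra.
  have := normr_ge0 (S_map phi Z (Sig h)).
  rewrite !expr2 in h5; nra.
  Unshelve. all: try by end_near.
have KS h : Kset Z (Sig h.+1).
  exists (\row_i kirwls_weight phi Z (Sig h) i).
    move=> i; rewrite /= in_itv /= mxE.
    have pi0 : 0 <= phi `|Z i - Sig h| by apply: (phi_ge0 zeta_nondecr zeta_der phi_def phi_nonincr).
    have W0 : 0 <= \sum_b phi `|Z b - Sig h| by exact: (W_ge0 zeta_nondecr zeta_der phi_def phi_nonincr).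
    rewrite /kirwls_weight divr_ge0 //=.
    have [->|Wn0] := eqVneq (\sum_b phi `|Z b - Sig h|) 0; first by rewrite invr0 mulr0.
    rewrite ler_pdivrMr ?mul1r; last by rewrite lt_neqAle eq_sym Wn0.
    rewrite (bigD1 i) //= lerDl; apply: sumr_ge0 => j _.
    exact: (phi_ge0 zeta_nondecr zeta_der phi_def phi_nonincr).
  by rewrite hstep /kirwls_step; apply: eq_bigr => i _; rewrite mxE.
have near_e := limit_arg (@Kset_compact _ _ _ Z) KS (S_cont phi_cont) Sx.
apply/fine_cvgP; split.
  have := near_e 1 ltr01; apply: filterS => h [s [Us hs]].
  have [r [-> _]] := @inf_bound _ _ U _ _ _ Us hs; by [].
apply/cvgr0Pnorm_lt => e e0.
have := near_e e e0; apply: filterS => h [s [Us hs]].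
have [r [hr /andP[r0 re]]] := @inf_bound _ _ U _ _ _ Us hs.
by rewrite /= hr /= ger0_norm.
Qed.
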